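(* Let $\mathbb{K}$ be a field and let $L_1,\ldots,L_k$ be nonzero elements of $\mathbb{K}[x]\langle\partial\rangle$ of orders at most $r$ and with coefficients of degrees at most $d$. Then there exist nonzero common left multiples of $L_1,\ldots,L_k$ in $\mathbb{K}[x]\langle\partial\rangle$ of total degree at most $2k(d+r)$ in $(x,\partial)$, and of total arithmetic size $O(k^2(d+r)^2)$.
   Context: $\mathbb{K}[x]\langle\partial\rangle$ is the ring of differential operators $\sum a_{ij}x^i\partial^j$ ($a_{ij}\in\mathbb{K}$) with $\partial x=x\partial+1$. A common left multiple of $L_1,\ldots,L_k$ is an operator $L$ with $L=Q_1L_1=\cdots=Q_kL_k$ for some operators $Q_i$ (here all in $\mathbb{K}[x]\langle\partial\rangle$). The total degree of a nonzero operator $\sum a_{ij}x^i\partial^j$ is $\max\{i+j: a_{ij}\neq0\}$. The total arithmetic size of an operator is the number of coefficients in $\mathbb{K}$ needed to represent it in the monomial basis $x^i\partial^j$ up to its total degree; the $O(\cdot)$ constant is absolute. *)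

(* Defs.v *)
From HB Require Import structures.
From mathcomp Require Import all_boot all_order all_algebra.
Set Implicit Arguments. Unset Strict Implicit. Unset Printing Implicit Defensive.
Import GRing.Theory.
Local Open Scope ring_scope.

(* Differential operators K[x]<d> with  d x = x d + 1, represented as
   polynomials in d with coefficients in K[x]:
   L = \sum_j L`_j * d^j  is an element of {poly {poly K}},
   the inner polynomial variable being x, the outer one being d.
   The ring structure of {poly {poly K}} is the commutative one; the
   (non-commutative) Weyl product is weyl_mul below, defined by the
   Leibniz rule  (a d^i)(b d^j) = \sum_k C(i,k) a b^(k) d^(i+j-k). *)
Notation diffop K := {poly {poly K}}.
Section Weyl.
Variable K : fieldType.
Local Notation diffop := (diffop K).

Definition weyl_mul (L M : diffop) : diffop :=
  \sum_(i < size L) \sum_(j < size M) \sum_(k < i.+1)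
     (((L`_i * (M`_j)^`(k)) *+ 'C(i, k)) *: 'X^(i + j - k)).

(* order in d (meaningful for nonzero L) *)
Definition op_order (L : diffop) : nat := (size L).-1.

Definition coef_deg_le (L : diffop) (d : nat) : Prop :=
  forall j, (size (L`_j)%R <= d.+1)%N.

Definition total_degree (L : diffop) : nat :=
  \max_(j < size L) (if (L`_j != 0)%R then ((size (L`_j)%R).-1 + j)%N else 0%N).

(* number of monomials x^i d^j with i + j <= total degree *)
Definition arith_size (L : diffop) : nat := 'C(total_degree L + 2, 2).

Definition common_left_multiple (k : nat) (Ls : 'I_k -> diffop) (L : diffop) :=
  forall m : 'I_k, exists Q : diffop, L = weyl_mul Q (Ls m).
End Weyl.

(* Main.v *)
Require Import Defs.
From mathcomp Require Import all_boot all_order all_algebra.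
From mathcomp Require Import zify ring.
Import GRing.Theory.
Local Open Scope ring_scope.

Lemma kernel_exists (K : fieldType) (I J : finType) (F : I -> J -> K) :
  (#|J| < #|I|)%N ->
  exists v : I -> K, (exists u, v u != 0) /\ forall w, \sum_u v u * F u w = 0.
Proof.
move=> ltJI.
pose A : 'M[K]_(#|I|, #|J|) := \matrix_(a, b) F (enum_val a) (enum_val b).
have rk : (0 < \rank (kermx A))%N.
  rewrite mxrank_ker; have := rank_leq_col A; lia.
have : kermx A != 0 by rewrite -mxrank_eq0 -lt0n.
move=> nz.
have [a [c Hc]] : exists a c, kermx A a c != 0.
  case: (pickP [pred p : 'I_#|I| * 'I_#|I| | kermx A p.1 p.2 != 0]) => [[a c] Hc|H0].
    by exists a, c.
  case/eqP: nz; apply/matrixP => i j; move: (H0 (i,j)) => /= /negbFE/eqP ->.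
  by rewrite mxE.
pose rw := row a (kermx A).
have H0 : rw *m A = 0 by rewrite -row_mul mulmx_ker row0.
exists (fun u => rw 0 (enum_rank u)); split.
  by exists (enum_val c); rewrite enum_valK /rw mxE.
move=> w.
have E : (rw *m A) 0 (enum_rank w : 'I_#|J|) = 0 by rewrite H0 mxE.
apply: etrans E; rewrite mxE (reindex (fun a : 'I_#|I| => enum_val a)) /=; last first.
  by exists (@enum_rank I) => x _; [rewrite enum_valK | rewrite enum_rankK].
apply: eq_bigr => x _; by rewrite enum_valK !mxE enum_rankK.
Qed.

Section W.
Variable K : fieldType.
Local Notation dop := (diffop K).

Definition wterm (L M : dop) (i j k : nat) : dop :=
  (((L`_i * (M`_j)^`(k)) *+ 'C(i, k)) *: 'X^(i + j - k)).

Lemma weyl_mulE (L M : dop) n : (size L <= n)%N ->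
  weyl_mul L M = \sum_(i < n) \sum_(j < size M) \sum_(k < i.+1) wterm L M i j k.
Proof.
move=> Hn; rewrite /weyl_mul (big_ord_widen n (fun i => \sum_(j < size M) \sum_(k < i.+1) wterm L M i j k)) //.
rewrite big_mkcond; apply: eq_bigr => i _; case: ifP => // /negbT; rewrite -leqNgt => H.
rewrite big1 // => j _; rewrite big1 // => k _.
by rewrite /wterm nth_default // mul0r mul0rn scale0r.
Qed.

Lemma weyl_mulDl (L1 L2 M : dop) :
  weyl_mul (L1 + L2) M = weyl_mul L1 M + weyl_mul L2 M.
Proof.
pose n := maxn (size L1) (size L2).
rewrite (@weyl_mulE _ _ n) ?(leq_trans (size_polyD _ _)) //.
rewrite (@weyl_mulE L1 _ n) ?leq_maxl // (@weyl_mulE L2 _ n) ?leq_maxr //.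
rewrite -big_split; apply: eq_bigr => i _; rewrite -big_split; apply: eq_bigr => j _.
rewrite -big_split; apply: eq_bigr => k _.
by rewrite /wterm coefD mulrDl mulrnDl scalerDl.
Qed.

Lemma weyl_mul0l (M : dop) : weyl_mul 0 M = 0.
Proof. by rewrite /weyl_mul size_poly0 big_ord0. Qed.

Lemma weyl_mulZl (a : {poly K}) (L M : dop) :
  weyl_mul (a *: L) M = a *: weyl_mul L M.
Proof.
rewrite (@weyl_mulE _ _ (size L)) ?size_scale_leq // /weyl_mul scaler_sumr.
apply: eq_bigr => i _; rewrite scaler_sumr; apply: eq_bigr => j _.
rewrite scaler_sumr; apply: eq_bigr => k _.
rewrite /wterm coefZ scalerA; congr (_ *: _); by rewrite mulrnAr mulrA.
Qed.

Lemma weyl_mul_sum (I : finType) (F : I -> dop) (M : dop) :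
  weyl_mul (\sum_i F i) M = \sum_i weyl_mul (F i) M.
Proof.
exact: (big_morph (fun Q => weyl_mul Q M) (fun a b => weyl_mulDl a b M) (weyl_mul0l M)).
Qed.


Definition tdle (P : dop) (N : nat) := forall j, (size (P`_j)%R <= N.+1 - j)%N.

Lemma tdle0 N : tdle 0 N.
Proof. by move=> j; rewrite coef0 size_poly0. Qed.

Lemma tdleD P Q N : tdle P N -> tdle Q N -> tdle (P + Q) N.
Proof.
move=> HP HQ j; rewrite coefD; apply: leq_trans (size_polyD _ _) _.
by rewrite geq_max HP HQ.
Qed.

Lemma tdle_sum (I : finType) (F : I -> dop) N :
  (forall i, tdle (F i) N) -> tdle (\sum_i F i) N.
Proof.
move=> H; apply: (big_ind (fun P => tdle P N)); [exact: tdle0 | move=> x y; exact: tdleD | by []].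
Qed.

Lemma tdleZ (a : {poly K}) P N : (size a <= 1)%N -> tdle P N -> tdle (a *: P) N.
Proof.
move=> Ha HP j; rewrite coefZ; apply: leq_trans (size_polyMleq _ _) _.
have := HP j; case: (size a) Ha => [|[|]] //= _.
by rewrite add0n; move=> h; apply: leq_trans (leq_pred _) h.
Qed.

Lemma tdle_term (c : {poly K}) e N : (size c <= N.+1 - e)%N -> tdle (c *: 'X^e) N.
Proof.
move=> H j; rewrite coefZ coefXn; case: eqP => [->|_]; first by rewrite mulr1.
by rewrite mulr0 size_poly0.
Qed.

Lemma size_derivn_le (p : {poly K}) k : (size p^`(k) <= size p - k)%N.
Proof.
apply/leq_sizeP => j Hj; rewrite coef_derivn nth_default ?mul0rn //; by rewrite -leq_subLR.
Qed.

Lemma size_mulrn_le (p : {poly K}) n : (size (p *+ n) <= size p)%N.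
Proof.
apply/leq_sizeP => j Hj; by rewrite coefMn nth_default ?mul0rn.
Qed.

Lemma arith_weyl (q l' lj i j k a b : nat) : (k < i.+1)%N ->
  (q <= a.+1 - i)%N -> (l' <= lj - k)%N -> (lj <= b.+1 - j)%N -> (0 < q)%N -> (0 < l')%N ->
  ((q + l').-1 <= (a + b).+1 - (i + j - k))%N.
Proof. lia. Qed.

Lemma tdle_weyl (Q L : dop) a b : tdle Q a -> tdle L b -> tdle (weyl_mul Q L) (a + b).
Proof.
move=> HQ HL; rewrite /weyl_mul.
apply: tdle_sum => i; apply: tdle_sum => j; apply: tdle_sum => k.
apply: tdle_term.
apply: leq_trans (size_mulrn_le _ _) _.
have hk := ltn_ord k.
have hQ := HQ i; have hL := HL j; have hD := size_derivn_le (L`_j) k.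
case: (eqVneq (Q`_i) 0) => [->|nQ]; first by rewrite mul0r size_poly0.
case: (eqVneq ((L`_j)^`(k)) 0) => [->|nD]; first by rewrite mulr0 size_poly0.
rewrite size_mul //.
apply: (@arith_weyl _ _ _ _ _ _ _ _ hk hQ hD hL); by rewrite size_poly_gt0.
Qed.


Lemma tdle_total_degree P N : tdle P N -> (total_degree P <= N)%N.
Proof.
move=> H; rewrite /total_degree; apply/bigmax_leqP => j _.
case: ifP => // nz; have := H j.
have : (0 < size (P`_j)%R)%N by rewrite size_poly_gt0.
move: (size _) => z; lia.
Qed.

Lemma coef_wterm (Q L : dop) i j k t :
  (wterm Q L i j k)`_t = ((Q`_i * (L`_j)^`(k)) *+ 'C(i, k)) * (t == (i + j - k)%N)%:R.
Proof. by rewrite /wterm coefZ coefXn. Qed.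

Lemma weyl_mul_neq0 (Q L : dop) : Q != 0 -> L != 0 -> weyl_mul Q L != 0.
Proof.
move=> nQ nL.
set a := (size Q).-1; set b := (size L).-1.
have sQ : size Q = a.+1 by rewrite /a prednK // size_poly_gt0.
have sL : size L = b.+1 by rewrite /b prednK // size_poly_gt0.
have E : (weyl_mul Q L)`_(a + b) = lead_coef Q * lead_coef L.
  rewrite (@weyl_mulE Q L a.+1) ?sQ // sL coef_sum big_ord_recr /=.
  rewrite big1 ?add0r; last first.
    move=> i _; rewrite coef_sum big1 // => j _; rewrite coef_sum big1 // => k _.
    rewrite coef_wterm; case: eqP => [|_]; last by rewrite mulr0.
    have := ltn_ord i; have := ltn_ord j; have := ltn_ord k; move=> /= h1 h2 h3 h4; lia.
  rewrite coef_sum big_ord_recr /= big1 ?add0r; last first.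
    move=> j _; rewrite coef_sum big1 // => k _.
    rewrite coef_wterm; case: eqP => [|_]; last by rewrite mulr0.
    have := ltn_ord j; have := ltn_ord k; move=> /= h1 h2 h3; lia.
  rewrite coef_sum big_ord_recl /= big1 ?addr0; last first.
    move=> k _; rewrite coef_wterm; case: eqP => [|_]; last by rewrite mulr0.
    have := ltn_ord k; rewrite /bump /=; move=> h1 h2; lia.
  by rewrite coef_wterm subn0 eqxx derivn0 bin0 mulr1 mulr1n /lead_coef sQ sL.
apply/eqP => H; move: E; rewrite H coef0 => /esym /eqP.
by rewrite mulf_eq0 !lead_coef_eq0 (negbTE nQ) (negbTE nL).
Qed.

Lemma tdleN P N : tdle P N -> tdle (- P) N.
Proof. by move=> H j; rewrite coefN size_polyN. Qed.

Definition mono (a b : nat) : dop := ('X^a : {poly K}) *: 'X^b.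
Definition coefD (P : dop) (x y : nat) : K := (P`_y)`_x.

Lemma coefD_lin (I : finType) (c : I -> K) (X : I -> dop) x y :
  coefD (\sum_u (c u)%:P *: X u) x y = \sum_u c u * coefD (X u) x y.
Proof.
rewrite /coefD coef_sum coef_sum; apply: eq_bigr => u _.
by rewrite coefZ coefCM.
Qed.

Lemma coefD_mono a b x y : coefD (mono a b) x y = ((a == x) && (b == y))%:R.
Proof.
rewrite /coefD /mono coefZ coefXn eq_sym; case: eqP => _; last by rewrite andbF mulr0 coef0.
by rewrite mulr1 coefXn andbT eq_sym.
Qed.

Lemma tdle_mono a b N : (a + b <= N)%N -> tdle (mono a b) N.
Proof. move=> H; apply: tdle_term; rewrite size_polyXn; lia. Qed.

Lemma vanish (D : dop) N : tdle D N ->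
  (forall x y, (x + y <= N)%N -> coefD D x y = 0) -> D = 0.
Proof.
move=> HD H; apply/polyP => y; apply/polyP => x; rewrite !coef0.
case: (leqP (x + y) N) => h; first exact: H.
rewrite nth_default //; apply: leq_trans (HD y) _; lia.
Qed.

End W.

Definition Sd (N : nat) := {p : 'I_N.+1 * 'I_N.+1 | (p.1 + p.2 <= N)%N}.

Lemma sum_lt_min (n c : nat) : (\sum_(b < n) (if (b < c)%N then 1 else 0))%N = minn c n.
Proof.
elim: n => [|n IH]; first by rewrite big_ord0 minn0.
rewrite big_ord_recr /= IH; case: ltnP => H; lia.
Qed.

Lemma sum_succ (n : nat) : (2 * \sum_(a < n) (n - a))%N = (n * n.+1)%N.
Proof.
elim: n => [|n IH]; first by rewrite big_ord0.
rewrite big_ord_recr /= (eq_bigr (fun a : 'I_n => (n - a) + 1)%N); last first.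
  by move=> a _; have := ltn_ord a; lia.
rewrite big_split /= sum_nat_const card_ord; move: IH; move: (\sum_(i < n) (n - i))%N => S; lia.
Qed.

Lemma card_Sd N : (2 * #|{: Sd N}|)%N = (N.+1 * N.+2)%N.
Proof.
rewrite card_sig -sum1_card big_mkcond /=.
rewrite -(pair_bigA _ (fun (a b : 'I_N.+1) => if (a + b <= N)%N then 1%N else 0%N)) /=.
have -> : (\sum_(a < N.+1) \sum_(b < N.+1) (if (a + b <= N)%N then 1 else 0))%N
         = (\sum_(a < N.+1) (N.+1 - a))%N.
  apply: eq_bigr => a _.
  rewrite (eq_bigr (fun b : 'I_N.+1 => if (b < N.+1 - a)%N then 1%N else 0%N)).
    by rewrite sum_lt_min; have := ltn_ord a; lia.
  move=> b _; have -> // : (a + b <= N)%N = (b < N.+1 - a)%N.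
  have := ltn_ord a; lia.
by rewrite sum_succ.
Qed.

Lemma ineq k s : (k * ((2*k+2)*s+1) * ((2*k+2)*s+2) < (k+1) * ((2*k+1)*s+1)*((2*k+1)*s+2))%N.
Proof. nia. Qed.

Lemma arith_sz T k s : (T <= 2 * k * s)%N -> ('C(T + 2, 2) <= 4 * (k * s).+1 ^ 2)%N.
Proof.
move=> H; apply: leq_trans (leq_bin2l _ (_ : T + 2 <= 2 * k * s + 2)%N) _; first lia.
rewrite bin2 leq_half_double -mul2n. nia.
Qed.

Lemma pred_le x r j : (x.-1 <= r)%N -> (r < j)%N -> (x <= j)%N.
Proof. lia. Qed.

Theorem theorem8 :
  exists C : nat,
  forall (K : fieldType) (k r d : nat) (Ls : 'I_k -> diffop K),
    (forall m, Ls m != 0) ->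
    (forall m, (op_order (Ls m) <= r)%N) ->
    (forall m, coef_deg_le (Ls m) d) ->
    exists L : diffop K,
      [/\ L != 0, common_left_multiple Ls L,
          (total_degree L <= 2 * k * (d + r))%N
        & (arith_size L <= C * (k * (d + r)).+1 ^ 2)%N].
Proof.
exists 4%N => K k r d Ls nz Hord Hdeg.
have ar : forall L : diffop K, (total_degree L <= 2 * k * (d + r))%N ->
   (arith_size L <= 4 * (k * (d + r)).+1 ^ 2)%N.
  by move=> L H; apply: arith_sz.
case: k Ls nz Hord Hdeg ar => [|k'] Ls nz Hord Hdeg ar.
  have t1 : (total_degree (1 : diffop K) <= 2 * 0 * (d + r))%N.
    apply: tdle_total_degree => j; rewrite coefC.
    by case: j => [|j] /=; rewrite ?size_poly1 ?size_poly0.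
  exists 1; split => //; [exact: oner_neq0 | by case | exact: ar].
set s := (d + r)%N.
set M := ((2 * k' + 1) * s)%N.
set N := (M + s)%N.
have tL : forall m, tdle K (Ls m) s.
  move=> m j; case: (leqP j r) => hj.
    apply: leq_trans (Hdeg m j) _; rewrite /s; lia.
  rewrite nth_default ?size_poly0 //; apply: (@pred_le _ r) hj; exact: Hord.
pose G := fun (u : 'I_k'.+1 * Sd M) (i : 'I_k'.+1) =>
  if u.1 == i then weyl_mul (mono K (val u.2).1 (val u.2).2) (Ls i) else 0.
pose F := fun u (w : 'I_k' * Sd N) =>
  coefD K (G u (lift ord0 w.1) - G u ord0) (val w.2).1 (val w.2).2.
have card_lt : (#|{: 'I_k' * Sd N}| < #|{: 'I_k'.+1 * Sd M}|)%N.
  rewrite !card_prod !card_ord.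
  have cN := card_Sd N; have cM := card_Sd M.
  have := ineq k' s.
  move: cN cM; rewrite /N /M.
  move: (#|{: Sd _}|) (#|{: Sd ((2 * k' + 1) * s)}|) => a b ha hb.
  nia.
have [v [[u0 nzu0] Hv]] := @kernel_exists K _ _ F card_lt.
pose Q := fun i => \sum_(p : Sd M) (v (i, p))%:P *: mono K (val p).1 (val p).2.
have HG : forall i, \sum_u (v u)%:P *: G u i = weyl_mul (Q i) (Ls i).
  move=> i.
  rewrite (eq_bigr (fun u => (v (u.1, u.2))%:P *: G (u.1, u.2) i)); last by case.
  rewrite -(pair_bigA _ (fun a b => (v (a, b))%:P *: G (a, b) i)) /=.
  rewrite (bigD1 i) //= [X in _ + X]big1 ?addr0; last first.
    move=> a Ha; apply: big1 => p _; rewrite /G /=; case: eqP => [e|_]; last by rewrite scaler0.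
    by move: Ha; rewrite e eqxx ?andbF.
  rewrite weyl_mul_sum; apply: eq_bigr => p _.
  by rewrite /G /= eqxx weyl_mulZl.
have tQ : forall i, tdle K (Q i) M.
  move=> i; apply: tdle_sum => p; apply: tdleZ; first exact: size_polyC_leq1.
  by apply: tdle_mono; case: p.
have HD : forall j : 'I_k', weyl_mul (Q (lift ord0 j)) (Ls (lift ord0 j)) = weyl_mul (Q ord0) (Ls ord0).
  move=> j; apply/eqP; rewrite -subr_eq0; apply/eqP.
  apply: (@vanish _ _ N).
    by apply: tdleD; [|apply: tdleN]; apply: tdle_weyl.
  move=> x y Hxy.
  have Hxy' : ((inord x : 'I_N.+1) + (inord y : 'I_N.+1) <= N)%N.
    by rewrite !inordK //; lia.
  have := Hv (j, exist _ (inord x, inord y) Hxy'); rewrite /F /= !inordK; try lia.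
  move=> <-; rewrite -!HG -sumrB.
  rewrite (eq_bigr (fun u => (v u)%:P *: (G u (lift ord0 j) - G u ord0))); last first.
    by move=> u _; rewrite scalerBr.
  by rewrite coefD_lin.
have Hall : forall m, weyl_mul (Q m) (Ls m) = weyl_mul (Q ord0) (Ls ord0).
  by move=> m; case: (unliftP ord0 m) => [j ->|->] //; apply: HD.
exists (weyl_mul (Q ord0) (Ls ord0)); split.
- case: u0 nzu0 => i0 [[a0 b0] h0] nzu0.
  rewrite -(Hall i0); apply: weyl_mul_neq0 => //.
  apply/eqP => HQ; move/eqP: nzu0; apply.
  have := congr1 (fun P => coefD K P a0 b0) HQ.
  have c0 : coefD K 0 a0 b0 = 0 by rewrite /coefD !coef0.
  rewrite /Q coefD_lin c0 => <-.
  rewrite (bigD1 (exist _ (a0, b0) h0)) //= coefD_mono !eqxx mulr1 big1 ?addr0 //.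
  move=> [[a1 b1] h1] /= np; rewrite coefD_mono.
  case: eqP => e1; case: eqP => e2 //=; rewrite ?mulr0 //.
  case/eqP: np; apply: val_inj => /=.
  by rewrite (ord_inj e1) (ord_inj e2).
- by move=> m; exists (Q m); rewrite Hall.
- apply: tdle_total_degree.
  have -> : (2 * k'.+1 * (d + r) = M + s)%N by rewrite /M /s; lia.
  exact: tdle_weyl.
- apply: ar; apply: tdle_total_degree.
  have -> : (2 * k'.+1 * (d + r) = M + s)%N by rewrite /M /s; lia.
  exact: tdle_weyl.
Qed.
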